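(* Let $d\geq 1$. Every $d$-degenerate graph $G$ with $n$ vertices and $m\geq\binom{d}{2}$ edges satisfies $$c(G)\;\leq\; n+\frac{(2^d-1)m}{d}-\frac{(d-3)2^d+d+1}{2}.$$
   Context: All graphs are finite, simple and undirected. A graph $G$ is $d$-degenerate if every subgraph of $G$ has a vertex of degree at most $d$. A clique of a graph $G$ is a (possibly empty) set of pairwise adjacent vertices; $c(G)$ denotes the number of cliques of $G$ (including the empty clique, all single vertices and all edges). *)

(* Defs.v *)
From mathcomp Require Import all_boot all_order all_algebra.
Set Implicit Arguments. Unset Strict Implicit. Unset Printing Implicit Defensive.

Definition simple_graph (T : finType) (e : rel T) : Prop :=
  symmetric e /\ irreflexive e.

Definition edges (T : finType) (e : rel T) : {set {set T}} :=
  [set A : {set T} | [exists x, exists y, (e x y) && (A == [set x; y])]].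

Definition num_edges (T : finType) (e : rel T) : nat := #|edges e|.

Definition is_clique (T : finType) (e : rel T) (A : {set T}) : bool :=
  [forall x in A, forall y in A, (x != y) ==> e x y].

(* c(G): number of cliques, including the empty clique. *)
Definition num_cliques (T : finType) (e : rel T) : nat :=
  #|[set A : {set T} | is_clique e A]|.

(* d-degenerate: every (nonempty) subgraph has a vertex of degree <= d.
   It suffices to consider induced subgraphs on nonempty vertex sets S
   (deleting edges only lowers degrees). *)
Definition degenerate (T : finType) (e : rel T) (d : nat) : Prop :=
  forall S : {set T}, S != set0 ->
    exists2 v, v \in S & #|[set u in S | e v u]| <= d.

(* Main.v *)
Require Import Defs.
From mathcomp Require Import all_boot all_order all_algebra.
From mathcomp Require Import zify ring lra.
Set Implicit Arguments. Unset Strict Implicit. Unset Printing Implicit Defensive.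

Definition edgesIn (T : finType) (e : rel T) (S : {set T}) : {set {set T}} :=
  [set A in edges e | A \subset S].
Definition mS (T : finType) (e : rel T) (S : {set T}) := #|edgesIn e S|.
Definition cliquesIn (T : finType) (e : rel T) (S : {set T}) : {set {set T}} :=
  [set A | is_clique e A && (A \subset S)].
Definition cS (T : finType) (e : rel T) (S : {set T}) := #|cliquesIn e S|.
Definition nbr (T : finType) (e : rel T) (S : {set T}) (v : T) : {set T} :=
  [set u in S | e v u].

Lemma mS_split (T : finType) (e : rel T) (S : {set T}) (v : T) :
  simple_graph e -> v \in S ->
  mS e S = #|nbr e S v| + mS e (S :\ v).
Proof.
move=> [sym irr] vS.
have inj : {in nbr e S v &, injective (fun u => [set v; u])}.
  move=> u w; rewrite !inE => /andP[_ evu] /andP[_ evw] /setP H.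
  move: (H u); rewrite !inE eqxx orbT => /esym/orP[/eqP uv|/eqP //].
  by subst u; rewrite irr in evu.
rewrite /mS -(card_in_imset inj) -cardsUI.
have -> : [set [set v; u] | u in nbr e S v] :&: edgesIn e (S :\ v) = set0.
  apply/setP=> A; rewrite !inE; apply/negbTE/negP => /andP[/imsetP[u _ ->]].
  by move=> /andP[_ /subsetP /(_ v)]; rewrite !inE eqxx /= => /(_ isT).
rewrite cards0 addn0; apply: eq_card => A; rewrite /edgesIn !inE.
apply/idP/idP.
- move=> /andP[HA AS].
  case vA: (v \in A).
  + apply/orP; left; move: HA => /existsP[x /existsP[y /andP[exy /eqP AE]]].
    subst A; move: vA; rewrite !inE => /orP[/eqP vx|/eqP vy].
    * subst x; apply/imsetP; exists y => //; rewrite inE exy andbT.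
      by apply: (subsetP AS); rewrite !inE eqxx orbT.
    * subst y; apply/imsetP; exists x; last by rewrite setUC.
      rewrite inE (sym v x) exy andbT.
      by apply: (subsetP AS); rewrite !inE eqxx.
  + apply/orP; right; rewrite HA /=; apply/subsetP => x xA.
    rewrite !inE (subsetP AS _ xA) andbT; apply/eqP => xv; subst x.
    by rewrite xA in vA.
- move=> /orP[/imsetP[u]|/andP[HA AS]].
  + rewrite inE => /andP[uS evu] ->; apply/andP; split.
    * apply/existsP; exists v; apply/existsP; exists u.
      by rewrite evu eqxx.
    * by apply/subsetP => x; rewrite !inE => /orP[/eqP->|/eqP->].
  + rewrite HA /=; apply: (subset_trans AS); apply/subsetP=> x.
    by rewrite !inE => /andP[].
Qed.

Lemma is_cliqueP (T : finType) (e : rel T) (A : {set T}) :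
  reflect (forall x y, x \in A -> y \in A -> x != y -> e x y) (is_clique e A).
Proof.
apply: (iffP forall_inP) => H.
- by move=> x y xA yA nxy; move: (H x xA) => /forall_inP /(_ y yA) /implyP; apply.
- by move=> x xA; apply/forall_inP => y yA; apply/implyP; apply: H.
Qed.

Lemma cS_split (T : finType) (e : rel T) (S : {set T}) (v : T) :
  simple_graph e -> v \in S ->
  cS e S = cS e (S :\ v) + cS e (nbr e S v).
Proof.
move=> [sym irr] vS.
have vN : forall B, B \in cliquesIn e (nbr e S v) -> v \notin B.
  move=> B; rewrite inE => /andP[_ /subsetP BN]; apply/negP => /BN.
  by rewrite inE irr andbF.
have inj : {in cliquesIn e (nbr e S v) &, injective (fun B => v |: B)}.
  move=> B C BN CN H.
  by rewrite -(setU1K (vN _ BN)) -(setU1K (vN _ CN)) H.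
rewrite /cS -(card_in_imset inj) -cardsUI.
have -> : cliquesIn e (S :\ v) :&: [set v |: B | B in cliquesIn e (nbr e S v)] = set0.
  apply/setP=> A; rewrite !inE; apply/negbTE/negP => /andP[].
  move=> /andP[_ /subsetP AS] /imsetP[B _ AE].
  by move: (AS v); rewrite AE !inE eqxx /= => /(_ isT).
rewrite cards0 addn0; apply: eq_card => A; rewrite /cliquesIn !inE.
apply/idP/idP.
- move=> /andP[cA AS].
  case vA: (v \in A).
  + apply/orP; right; apply/imsetP; exists (A :\ v).
    * rewrite inE; apply/andP; split.
        apply/is_cliqueP => x y; rewrite !inE => /andP[_ xA] /andP[_ yA].
        by move/is_cliqueP: cA; apply.
      apply/subsetP => x; rewrite !inE => /andP[xv xA].
      rewrite (subsetP AS _ xA) /=.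
      by move/is_cliqueP: cA; apply => //; rewrite eq_sym.
    * by rewrite setD1K.
  + apply/orP; left; rewrite cA /=; apply/subsetP => x xA.
    rewrite !inE (subsetP AS _ xA) andbT; apply/eqP => xv; subst x.
    by rewrite xA in vA.
- move=> /orP[/andP[cA AS]|/imsetP[B]].
  + rewrite cA /=; apply: (subset_trans AS); apply/subsetP=> x.
    by rewrite !inE => /andP[].
  + rewrite inE => /andP[cB /subsetP BN] ->; apply/andP; split.
    * apply/is_cliqueP => x y; rewrite !inE => /orP[/eqP->|xB] /orP[/eqP->|yB].
      -- by rewrite eqxx.
      -- by move=> _; move: (BN y yB); rewrite inE => /andP[].
      -- by move=> _; move: (BN x xB); rewrite inE sym => /andP[].
      -- by move/is_cliqueP: cB; apply.
    * apply/subsetP => x; rewrite !inE => /orP[/eqP->//|/BN].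
      by rewrite inE => /andP[].
Qed.

Lemma cS_pow (T : finType) (e : rel T) (S : {set T}) : cS e S <= 2 ^ #|S|.
Proof.
rewrite -card_powerset; apply: subset_leq_card; apply/subsetP => A.
by rewrite !inE => /andP[].
Qed.

Lemma cS0 (T : finType) (e : rel T) : cS e set0 = 1.
Proof.
rewrite /cS -(cards1 (set0 : {set T})); apply: eq_card => A; rewrite !inE subset0.
case: eqP => [->|] /=; rewrite ?andbF ?andbT //.
by apply/is_cliqueP => x y; rewrite inE.
Qed.

Lemma mS0 (T : finType) (e : rel T) : mS e set0 = 0.
Proof.
apply/eqP; rewrite cards_eq0; apply/eqP/setP => A; rewrite !inE subset0.
apply/negbTE/negP => /andP[/existsP[x /existsP[y /andP[_ /eqP ->]]]].
by move/eqP/setP/(_ x); rewrite !inE eqxx.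
Qed.

Lemma nbrD1 (T : finType) (e : rel T) (S : {set T}) (v w : T) :
  #|nbr e S w| <= #|nbr e (S :\ v) w| + 1.
Proof.
rewrite (cardsD1 v) addnC.
have -> : nbr e S w :\ v = nbr e (S :\ v) w.
  by apply/setP => x; rewrite !inE andbA.
by rewrite leq_add2l; case: (_ \in _).
Qed.

Lemma binS2 k : 'C(k.+1, 2) = 'C(k, 2) + k.
Proof. by rewrite binS bin1. Qed.

Lemma deg_lb (T : finType) (e : rel T) k :
  simple_graph e -> forall S : {set T}, S != set0 ->
  (forall v, v \in S -> k <= #|nbr e S v|) -> 'C(k.+1, 2) <= mS e S.
Proof.
move=> G; elim: k => [|k IH] S Sn0 H; first by rewrite bin_small.
case/set0Pn: Sn0 => v vS.
rewrite (mS_split G vS) binS2 [X in _ <= X]addnC; apply: leq_add; last exact: H.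
apply: IH.
- have : 0 < #|nbr e S v| by apply: leq_trans (H v vS).
  rewrite card_gt0 => /set0Pn[u]; rewrite inE => /andP[uS evu].
  apply/set0Pn; exists u; rewrite !inE uS andbT; apply/eqP => uv; subst u.
  by case: G => _ irr; rewrite irr in evu.
- move=> w; rewrite inE => /andP[_ wS].
  have := nbrD1 e S v w; have := H w wS; lia.
Qed.

Lemma lemA (T : finType) (e : rel T) : simple_graph e ->
  forall n (S : {set T}), #|S| <= n -> forall t j, j <= t ->
  mS e S <= 'C(t, 2) + j -> cS e S + t + 1 <= #|S| + 2 ^ t + 2 ^ j.
Proof.
move=> G; elim=> [|n IH] S Sn t j jt mt.
  move: Sn; rewrite leqn0 cards_eq0 => /eqP ->; rewrite cS0 cards0.
  have := ltn_expl t (ltnSn 1); have := expn_gt0 2 j; lia.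
case: (set_0Vmem S) => [->|[v0 v0S]].
  rewrite cS0 cards0.
  have := ltn_expl t (ltnSn 1); have := expn_gt0 2 j; lia.
case: (arg_minnP (fun v => #|nbr e S v|) v0S) => v vS0 vmin.
have vS : v \in S := vS0.
set k := #|nbr e S v|.
have L : 'C(k.+1, 2) <= mS e S.
  by apply: (deg_lb G) => [|w wS]; [apply/set0Pn; exists v | exact: vmin].
have Em := mS_split G vS; rewrite -/k in Em.
have Ec := cS_split G vS.
have Pk : cS e (nbr e S v) <= 2 ^ k by have := cS_pow e (nbr e S v).
have Es := cardsD1 v S; rewrite vS in Es.
have Sn' : #|S :\ v| <= n by lia.
have B2 := binS2 k.
case: (leqP k j) => kj.
- have := IH _ Sn' t (j - k) ltac:(lia) ltac:(lia).
  have E2 : 2 ^ j = 2 ^ (j - k) * 2 ^ k by rewrite -expnD subnK.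
  have a1 := expn_gt0 2 (j - k); have b1 := expn_gt0 2 k.
  have : 2 ^ (j - k) + 2 ^ k <= 2 ^ (j - k) * 2 ^ k + 1 by nia.
  lia.
- have tk : k < t.
    case: (ltnP k t) => // tk'; have := leq_bin2l 2 tk'; lia.
  case: t jt mt tk => [//|t] jt mt tk.
  have B2t := binS2 t.
  have := IH _ Sn' t (t - k + j) ltac:(lia) ltac:(lia).
  set a := 2 ^ (t - k).
  have E1 : 2 ^ t = a * 2 ^ k by rewrite -expnD subnK.
  have E2 : 2 ^ (t - k + j) = a * 2 ^ j by rewrite expnD.
  have E3 : 2 ^ t.+1 = 2 * 2 ^ t by rewrite expnS.
  have a1 : 0 < a by rewrite expn_gt0.
  have jk : 2 ^ j <= 2 ^ k by rewrite leq_pexp2l // ltnW.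
  have : (a - 1) * 2 ^ j <= (a - 1) * 2 ^ k by rewrite leq_mul2l jk orbT.
  rewrite E1 E2 E3 => H1 H2.
  have : a * 2 ^ j + 2 ^ k <= a * 2 ^ k + 2 ^ j by nia.
  lia.
Qed.

Lemma conv d j : j <= d -> d * 2 ^ j <= d + (2 ^ d - 1) * j.
Proof.
move=> jd; rewrite -(subnK jd); move: (d - j) => r; clear jd.
rewrite expnD.
have hA : 2 ^ j <= j * 2 ^ j + 1.
  by case: j => [|j']; rewrite ?expn0 // mulSn -addnA leq_addr.
set A := 2 ^ j in hA *; set B := 2 ^ r.
have hB : r < B := ltn_expl r (ltnSn 1).
have A1 : 0 < A by rewrite expn_gt0.
have : r * (A - 1) <= (B - 1) * (j * A) by apply: leq_mul; lia.
nia.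
Qed.

Lemma bin2E d : 'C(d, 2) * 2 + d = d * d.
Proof. by elim: d => [|d IH] //; rewrite binS2; lia. Qed.

Lemma lemB (T : finType) (e : rel T) (d : nat) : 1 <= d -> simple_graph e ->
  degenerate e d ->
  forall n (S : {set T}), #|S| <= n -> 'C(d, 2) <= mS e S ->
  2 * d * cS e S + d * d * 2 ^ d + d * d + d <=
    2 * d * #|S| + 2 * (2 ^ d - 1) * mS e S + 3 * d * 2 ^ d.
Proof.
move=> d1 G D; elim=> [|n IH] S Sn md.
  move: Sn; rewrite leqn0 cards_eq0 => /eqP SE; subst S.
  move: md; rewrite cS0 cards0 mS0.
  clear D; case: d d1 => [|[|d]] // _; rewrite leqn0 binS2; lia.
have P1 : 0 < 2 ^ d by rewrite expn_gt0.
case: (set_0Vmem S) => [SE|[v0 v0S]].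
  subst S; move: md; rewrite cS0 cards0 mS0.
  clear D IH; case: d d1 P1 => [|[|d]] // _ _; rewrite leqn0 binS2; lia.
have [v vS kd] := D S ltac:(by apply/set0Pn; exists v0).
rewrite -/(nbr e S v) in kd; set k := #|nbr e S v| in kd.
have Em := mS_split G vS; rewrite -/k in Em.
have Ec := cS_split G vS.
have Pk : cS e (nbr e S v) <= 2 ^ k by have := cS_pow e (nbr e S v).
have Es := cardsD1 v S; rewrite vS in Es.
have Sn' : #|S :\ v| <= n by lia.
case: (leqP 'C(d, 2) (mS e (S :\ v))) => mk.
- have := IH _ Sn' mk.
  have := conv kd.
  have : 2 * d * cS e S <= 2 * d * cS e (S :\ v) + 2 * d * 2 ^ k.
    by rewrite -mulnDr leq_mul2l Ec leq_add2l Pk orbT.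
  rewrite Em Es; nia.
- set j := mS e S - 'C(d, 2).
  have hj : j <= d by lia.
  have := lemA G (leqnn #|S|) hj (_ : mS e S <= 'C(d, 2) + j).
  move=> /(_ ltac:(lia)) HA.
  have := conv hj.
  have := leq_mul (leqnn (2 * d)) HA.
  have := bin2E d.
  have mE : mS e S = 'C(d, 2) + j by lia.
  rewrite mE; nia.
Qed.

Import GRing.Theory Num.Theory.
Local Open Scope ring_scope.

Theorem theorem4 (d : nat) (T : finType) (e : rel T) :
  (1 <= d)%N ->
  simple_graph e ->
  degenerate e d ->
  ('C(d, 2) <= num_edges e)%N ->
  ((num_cliques e)%:R : rat) <=
    (#|T|)%:R + ((2 ^ d - 1)%:R * (num_edges e)%:R) / d%:R
    - (((d%:R - 3) * (2 ^ d)%:R + d%:R + 1) / 2).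
Proof.
move=> d1 G D md.
have Em : mS e setT = num_edges e.
  by apply: eq_card => A; rewrite /edgesIn inE subsetT andbT.
have Ec : cS e setT = num_cliques e.
  by apply: eq_card => A; rewrite /cliquesIn !inE subsetT andbT.
have := lemB d1 G D (leqnn #|[set: T]|); rewrite Em Ec cardsT => /(_ md).
have P1 : (1 <= 2 ^ d)%N by rewrite expn_gt0.
rewrite -(ler_nat rat) !natrD !natrM natrB // => H.
have dpos : (0 : rat) < d%:R by rewrite ltr0n.
rewrite -(ler_pM2l (_ : (0 : rat) < 2 * d%:R)); last by rewrite mulr_gt0.
set c := (num_cliques e)%:R in H *; set n := (#|T|)%:R in H *.
set m := (num_edges e)%:R in H *; set P := (2 ^ d)%:R in H *.
set x := d%:R in H dpos *.
have -> : 2 * x * (n + (P - 1) * m / x - ((x - 3) * P + x + 1) / 2)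
   = 2 * x * n + 2 * (P - 1) * m - x * ((x - 3) * P + x + 1).
  by field; rewrite lt0r_neq0.
move: H; rewrite -!natr1.
lra.
Qed.
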